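(* Let $\mathcal R$ be a reaction network and $\mathcal U\subseteq\mathcal S$ a set of non-interacting species. Let $r_0=(y_0,y_0')\in\mathcal R_{\mathcal U}'$, $m\ge1$, $r_{1i}=(y_i,y_i')\in\mathcal R_{\mathcal U}$ for $i=1,\dots,m$, and $r_1=\oplus_{i=1}^m r_{1i}$, and suppose $r_0\oplus r_1\notin\overline{\mathcal R}_{\mathcal U}$. Then: (i) $r_0\in\mathcal R_{\mathcal U}'\setminus\mathcal R_{\mathcal U}$ and $r_{1i}\in\mathcal R_{\mathcal U}\cap\mathcal R_{\mathcal U}'$ for $i=1,\dots,m-1$; (ii) $\mathrm{supp}(y_i)\cap\mathcal U=\mathrm{supp}(y_{i-1}')\cap\mathcal U\neq\emptyset$ for $i=1,\dots,m$; (iii) if $r_0\oplus r_1\in\overline{\mathcal R}_0$, then $r_{1m}\in\mathcal R_{\mathcal U}\setminus\mathcal R_{\mathcal U}'$. Conversely, let $r_0\in\mathcal R_{\mathcal U}'$, $r_{1i}\in\mathcal R_{\mathcal U}$ ($i=1,\dots,m$), $r_1=\oplus_{i=1}^m r_{1i}$, and suppose (i) and (ii) hold. Then $r_0\oplus r_1\notin\overline{\mathcal R}_{\mathcal U}$; and if furthermore $r_{1m}\in\mathcal R_{\mathcal U}\setminus\mathcal R_{\mathcal U}'$, then $r_0\oplus r_1\in\overline{\mathcal R}_0$.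
   Context: Species $S_1,\dots,S_n$ are the unit vectors of $\mathbb{N}_0^n$ and $\mathcal S=\{S_1,\dots,S_n\}$; for $x\in\mathbb{N}_0^n$, $\mathrm{supp}(x)=\{S_k: x^k>0\}$. A reaction network (RN) is a (possibly infinite) subset $\mathcal R\subseteq\mathbb{N}_0^n\times\mathbb{N}_0^n$ containing no $(y,y')$ with $y=y'$; elements $(y,y')$ are reactions $y\to y'$ with reactant $y$ and product $y'$. For $r_1=(y_1,y_1'),\ r_2=(y_2,y_2')$ define $r_1\oplus r_2=(y_1+0\vee(y_2-y_1'),\ y_2'+0\vee(y_1'-y_2))$ ($\vee$ componentwise maximum); it is associative. $\mathrm{cl}(A)$ is the set of all finite $\oplus$-sums of elements of $A$, including $(0,0)$. For $\mathcal U\subseteq\mathcal S$ and a set $B\subseteq\mathbb{N}_0^n\times\mathbb{N}_0^n$ write $B_{\mathcal U}=\{(y,y')\in B:\mathrm{supp}(y)\cap\mathcal U\neq\emptyset\}$ and $B_{\mathcal U}'=\{(y,y')\in B:\mathrm{supp}(y')\cap\mathcal U\neq\emptyset\}$. Set $\overline{\mathcal R}=\mathrm{cl}(\mathcal R)$ and $\overline{\mathcal R}_0=\overline{\mathcal R}\setminus(\overline{\mathcal R}_{\mathcal U}\cup\overline{\mathcal R}_{\mathcal U}')$. $\mathcal U$ consists of non-interacting species (in $\mathcal R$) if for every reaction $y\to y'\in\mathcal R$, $\sum_{S_i\in\mathcal U}y^i\le1$ and $\sum_{S_i\in\mathcal U}(y')^i\le1$. *)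

(* Defs.v *)
From mathcomp Require Import all_boot.
Set Implicit Arguments. Unset Strict Implicit. Unset Printing Implicit Defensive.

Definition vec (n : nat) := {ffun 'I_n -> nat}.
(* a reaction (y, y') : reactant, product *)
Definition reac (n : nat) := (vec n * vec n)%type.

Definition vzero n : vec n := [ffun _ => 0].

Definition supp n (x : vec n) : {set 'I_n} := [set k | 0 < x k].

(* r1 (+) r2 = (y1 + 0 v (y2 - y1'), y2' + 0 v (y1' - y2));
   truncated nat subtraction is exactly 0 v (a - b). *)
Definition oplus n (r1 r2 : reac n) : reac n :=
  ([ffun k => r1.1 k + (r2.1 k - r1.2 k)],
   [ffun k => r2.2 k + (r1.2 k - r2.1 k)]).

Definition bigoplus n (s : seq (reac n)) : reac n :=
  foldl (@oplus n) (vzero n, vzero n) s.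

Definition cl n (A : reac n -> Prop) (r : reac n) : Prop :=
  exists s : seq (reac n), (forall x, x \in s -> A x) /\ r = bigoplus s.

Definition inU n (U : {set 'I_n}) (B : reac n -> Prop) (r : reac n) : Prop :=
  B r /\ supp r.1 :&: U != set0.
Definition inU' n (U : {set 'I_n}) (B : reac n -> Prop) (r : reac n) : Prop :=
  B r /\ supp r.2 :&: U != set0.

Definition cl0 n (U : {set 'I_n}) (R : reac n -> Prop) (r : reac n) : Prop :=
  cl R r /\ ~ inU U (cl R) r /\ ~ inU' U (cl R) r.

Definition is_RN n (R : reac n -> Prop) : Prop := forall r, R r -> r.1 <> r.2.

Definition non_interacting n (R : reac n -> Prop) (U : {set 'I_n}) : Prop :=
  forall r, R r -> (\sum_(i in U) r.1 i <= 1) /\ (\sum_(i in U) r.2 i <= 1).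

(* Main.v *)
Require Import Defs.
From mathcomp Require Import all_boot.
From mathcomp Require Import zify.
Set Implicit Arguments. Unset Strict Implicit.

Section H.
Variable n : nat.

Lemma oplus_assoc (a b c : reac n) : oplus (oplus a b) c = oplus a (oplus b c).
Proof.
rewrite /oplus /=; congr pair; apply/ffunP => k; rewrite !ffunE /=; lia.
Qed.

Lemma oplus_z (a : reac n) : oplus a (vzero n, vzero n) = a.
Proof. case: a => a1 a2; rewrite /oplus /=; congr pair; apply/ffunP => k; rewrite !ffunE /=; lia. Qed.

Lemma z_oplus (a : reac n) : oplus (vzero n, vzero n) a = a.
Proof. case: a => a1 a2; rewrite /oplus /=; congr pair; apply/ffunP => k; rewrite !ffunE /=; lia. Qed.

Lemma foldl_oplus (a b : reac n) s : foldl (@oplus n) (oplus a b) s = oplus a (foldl (@oplus n) b s).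
Proof. elim: s a b => [|x s IH] a b //=; by rewrite -IH oplus_assoc. Qed.

Lemma one_U (U : {set 'I_n}) (a : vec n) u : \sum_(i in U) a i <= 1 -> u \in U -> 0 < a u ->
  a u = 1 /\ forall k, k \in U -> k != u -> a k = 0.
Proof.
move=> hs hu hp. rewrite (bigD1 u) //= in hs. split; first lia.
move=> k hk hku. rewrite (bigD1 k) /= in hs; last by rewrite hk hku. lia.
Qed.

Lemma eqU (U : {set 'I_n}) (a b : vec n) u : \sum_(i in U) a i <= 1 -> \sum_(i in U) b i <= 1 ->
  u \in U -> 0 < a u -> 0 < b u -> forall k, k \in U -> a k = b k.
Proof.
move=> ha hb hu pa pb k hk.
have [a1 a0] := one_U ha hu pa. have [b1 b0] := one_U hb hu pb.
case: (eqVneq k u) => [->|hku]; first by rewrite a1 b1.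
by rewrite a0 // b0.
Qed.

Lemma suppU_nz (U : {set 'I_n}) (x : vec n) : supp x :&: U != set0 -> exists2 u, u \in U & 0 < x u.
Proof. case/set0Pn => u; rewrite !inE => /andP[h1 h2]; by exists u. Qed.

Lemma suppU_nzI (U : {set 'I_n}) (x : vec n) u : u \in U -> 0 < x u -> supp x :&: U != set0.
Proof. move=> hu hx; apply/set0Pn; exists u; by rewrite !inE hx hu. Qed.

Lemma suppU_0 (U : {set 'I_n}) (x : vec n) : ~ (supp x :&: U != set0) -> forall k, k \in U -> x k = 0.
Proof. move=> h k hk; case: (posnP (x k)) => // hp; exfalso; apply: h; exact: suppU_nzI hp. Qed.

Lemma suppU_eq (U : {set 'I_n}) (x y : vec n) : (forall k, k \in U -> x k = y k) -> supp x :&: U = supp y :&: U.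
Proof. move=> h; apply/setP => k; rewrite !inE; case hk: (k \in U); rewrite ?andbF ?andbT //; by rewrite h. Qed.
End H.
Unset Implicit Arguments.

Theorem lemma4p9 (n : nat) (R : reac n -> Prop) (U : {set 'I_n}) :
  is_RN R -> non_interacting R U ->
  forall (m : nat) (r : nat -> reac n),
    1 <= m ->
    inU' U R (r 0) ->
    (forall i, 1 <= i <= m -> inU U R (r i)) ->
    let r1 := bigoplus [seq r i | i <- iota 1 m] in
    let cond_i := (inU' U R (r 0) /\ ~ inU U R (r 0)) /\
                  (forall i, 1 <= i <= m - 1 -> inU U R (r i) /\ inU' U R (r i)) in
    let cond_ii := forall i, 1 <= i <= m ->
                    supp (r i).1 :&: U = supp (r i.-1).2 :&: U /\
                    supp (r i).1 :&: U != set0 in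
    (~ inU U (cl R) (oplus (r 0) r1) ->
       cond_i /\ cond_ii /\
       (cl0 U R (oplus (r 0) r1) -> inU U R (r m) /\ ~ inU' U R (r m)))
    /\
    (cond_i -> cond_ii ->
       ~ inU U (cl R) (oplus (r 0) r1) /\
       (inU U R (r m) /\ ~ inU' U R (r m) -> cl0 U R (oplus (r 0) r1))).
Proof.
move=> _ hNI m r hm h0 hR r1 cond_i cond_ii.
pose P j := foldl (@oplus n) (r 0) [seq r i | i <- iota 1 j].
have PS : forall j, P j.+1 = oplus (P j) (r j.+1).
  move=> j; rewrite /P -(addn1 j) iotaD map_cat foldl_cat /= add1n; by rewrite addn1.
have E : oplus (r 0) r1 = P m.
  by rewrite /r1 /bigoplus -foldl_oplus oplus_z.
have Rr : forall j, j <= m -> R (r j).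
  move=> [|j] hj; first exact: h0.1. by case: (hR j.+1) => //; rewrite hj.
have sums : forall j, j <= m -> \sum_(i in U) (r j).1 i <= 1 /\ \sum_(i in U) (r j).2 i <= 1.
  move=> j hj; exact: hNI _ (Rr j hj).
have clP : cl R (P m).
  exists (r 0 :: [seq r i | i <- iota 1 m]); split; last by rewrite /bigoplus /= z_oplus.
  move=> x; rewrite inE => /orP[/eqP ->|/mapP[i]]; first exact: h0.1.
  rewrite mem_iota => hi ->; apply: Rr; lia.
have mono : forall i j k, i <= j -> (P i).1 k <= (P j).1 k.
  move=> i j k; elim: j => [|j IH]; first by rewrite leqn0 => /eqP ->.
  rewrite leq_eqVlt => /orP[/eqP ->//|hi]; rewrite PS /= ffunE.
  have := IH hi; lia.
rewrite E; split.
- move=> hnot.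
  have P1 : forall k, k \in U -> (P m).1 k = 0.
    apply: suppU_0 => h; apply: hnot; by split.
  have C : forall j, j <= m -> (forall k, k \in U -> (P j).2 k = (r j).2 k) /\
             (1 <= j -> forall k, k \in U -> (r j).1 k = (r j.-1).2 k).
    elim=> [|j IH] hj; first by split.
    have [IH1 _] := IH (ltnW hj).
    have hle : forall k, k \in U -> (r j.+1).1 k <= (r j).2 k.
      move=> k hk; have := mono j.+1 m k hj; rewrite P1 // PS /= ffunE IH1 //; lia.
    have [u hu pu] := suppU_nz (hR j.+1 (hj : 0 < j.+1 <= m)).2.
    have eq1 : forall k, k \in U -> (r j.+1).1 k = (r j).2 k.
      apply: (eqU (sums _ hj).1 (sums _ (ltnW hj)).2 hu pu).
      have := hle u hu; lia.
    split=> [k hk|_ //]; rewrite PS /= ffunE IH1 // eq1 //; lia.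
  have cii : cond_ii.
    move=> i /andP[hi1 him]; split; last exact: (hR i ltac:(by rewrite hi1 him)).2.
    apply: suppU_eq; exact: (C i him).2 hi1.
  split; [split|split=> //].
  + split=> //; case=> hR0 hs; have [u hu pu] := suppU_nz hs.
    have := mono 0 m u (leq0n m); rewrite P1 // /P /=; lia.
  + move=> i /andP[hi1 hi2]; split; first by apply: hR; lia.
    split; first by apply: Rr; lia.
    have [eqs ne] := cii i.+1 ltac:(simpl; lia).
    by rewrite -eqs.
  + case=> _ [_ hnU']; split; first by apply: hR; rewrite hm leqnn.
    case=> _ hs; have [u hu pu] := suppU_nz hs; apply: hnU'; split => //.
    apply: (suppU_nzI hu); rewrite (C m (leqnn m)).1 //.
- move=> [[_ hn0] _] cii.
  have C : forall j, j <= m -> forall k, k \in U -> (P j).1 k = 0 /\ (P j).2 k = (r j).2 k.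
    elim=> [|j IH] hj k hk.
      split=> //; apply: (suppU_0 _ hk) => hs; apply: hn0; split=> //; exact: h0.1.
    have [IH1 IH2] := IH (ltnW hj) k hk.
    have [eqs ne] := cii j.+1 (hj : 0 < j.+1 <= m).
    have [u] := suppU_nz ne; rewrite -/(is_true _) => hu pu.
    have pu' : 0 < (r j).2 u.
      move: (hu) => hu'. have : u \in supp (r j.+1).1 :&: U by rewrite !inE pu hu.
      by rewrite eqs !inE => /andP[].
    have eq1 := eqU (sums _ hj).1 (sums _ (ltnW hj)).2 hu pu pu' hk.
    rewrite PS /= !ffunE IH1 IH2 eq1; split; lia.
  have nU : ~ inU U (cl R) (P m).
    case=> _ hs; have [u hu pu] := suppU_nz hs; by rewrite (C m (leqnn m) u hu).1 in pu.
  split=> // -[_ hnU']; split=> //; split=> // -[_ hs].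
  have [u hu pu] := suppU_nz hs; apply: hnU'; split; first by apply: Rr.
  apply: (suppU_nzI hu); by rewrite -(C m (leqnn m) u hu).2.
Qed.
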